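(* Let $n\ge2$, $\kappa>0$, and let $\tilde\theta:\mathbb R\to[0,\infty)$ be locally Lipschitz and nondecreasing with $\tilde\theta(s)=0$ for $s\le 0$ and $\tilde\theta(s)>0$ for $s>0$; set $\theta(a,b)=\tilde\theta(\min(a,b))$. Let $1\le m<n$ and let $\rho:[0,\infty)\to\mathbb R^n$ be the solution of $$\frac{d\rho_j}{dt}=\kappa\sum_{k=1}^n\theta(\rho_j,\rho_k)(\rho_j-\rho_k),\qquad j=1,\dots,n,$$ with $\rho(0)\in\mathcal P$ satisfying $\rho_1(0)=\dots=\rho_m(0)>\rho_{m+1}(0)\ge\dots\ge\rho_n(0)$. Then $\rho_1(t)=\rho_2(t)=\dots=\rho_m(t)$ for all $t\ge0$, and $$\rho_1(t)-\max_{m<j\le n}\rho_j(t)\ \ge\ \rho_1(0)-\max_{m<j\le n}\rho_j(0)\qquad\forall t\ge0.$$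
   Context: $\mathcal P=\{\rho\in\mathbb R^n:\rho_i\ge0\ \forall i,\ \sum_{i=1}^n\rho_i=1\}$ denotes the probability simplex. *)

(* Defs.v *)
From HB Require Import structures.
From mathcomp Require Import all_boot all_order all_algebra.
From mathcomp Require Import all_classical all_reals all_analysis.
Set Implicit Arguments. Unset Strict Implicit. Unset Printing Implicit Defensive.
Import Order.TTheory GRing.Theory Num.Theory.
Import numFieldNormedType.Exports.
Local Open Scope classical_set_scope.
Local Open Scope ring_scope.

Definition in_simplex (R : realType) (n : nat) (x : 'I_n -> R) : Prop :=
  (forall i, 0 <= x i) /\ \sum_(i < n) x i = 1.

Definition loc_lipschitz (R : realType) (f : R -> R) : Prop :=
  forall x : R, exists delta : R, exists L : R, 0 < delta /\
    forall y z : R, `|y - x| < delta -> `|z - x| < delta ->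
      `|f y - f z| <= L * `|y - z|.

Definition theta (R : realType) (tth : R -> R) (a b : R) : R := tth (Num.min a b).

(* max_{m < j <= n} x_j  (0-based: indices j with m <= j < n); the seed
   x_m belongs to the index set, so this is exactly the maximum. *)
Definition tailmax (R : realType) (n m : nat) (hmn : (m < n)%N) (x : 'I_n -> R) : R :=
  \big[Num.max/x (Ordinal hmn)]_(j : 'I_n | (m <= j)%N) x j.

(* Main.v *)
Require Import Defs.
From HB Require Import structures.
From mathcomp Require Import all_boot all_order all_algebra.
From mathcomp Require Import all_classical all_reals all_analysis.
From mathcomp Require Import ring lra.
Import Order.TTheory GRing.Theory Num.Theory.
Import numFieldNormedType.Exports.
Local Open Scope classical_set_scope.
Local Open Scope ring_scope.

Lemma deriv_sign (R : realType) (g : R -> R) (t d : R) :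
  0 < t -> is_derive t 1 g d -> g t = 0 ->
  (forall s, 0 <= s -> s < t -> g s < 0) -> 0 <= d.
Proof.
move=> t0 [hd hv] gt0 hlt; rewrite leNgt; apply/negP => d0.
move: hd; rewrite /derivable => /cvg_ex [l hl].
have ld : l = d.
  by rewrite -hv /derive (cvg_lim _ hl).
subst l.
have := @cvgr_lt R _ (0^' : set_system R) ltac:(typeclasses eauto) _ _ hl _ d0.
rewrite /dnbhs /within /= => /nbhs_ballP [e /= e0 H].
pose h := - (Num.min (e / 2) (t / 2)).
have hlt0 : h < 0 by rewrite oppr_lt0 lt_min !divr_gt0.
have := H h.
have hb : ball 0 e h.
  rewrite /ball /= sub0r normrN ltr0_norm // /h opprK gt_min; apply/orP; left.
  by rewrite ltr_pdivrMr // ltr_pMr // ltr1n.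
move=> /(_ hb (ltr0_neq0 hlt0)) /=.
rewrite scaler1 gt0 subr0 /= => hq.
have hs : 0 <= h + t.
  rewrite /h addrC subr_ge0 ge_min; apply/orP; right.
  by rewrite ler_pdivrMr // ler_pMr // ler1n.
have hst : h + t < t by lra.
have := hlt _ hs hst.
move: hq; rewrite /GRing.scale /= nmulr_rlt0 ?invr_lt0 // => hq hneg; lra.
Qed.
Lemma first_hit (R : realType) (I : finType) (g : I -> R -> R) :
  (forall i, {within [set t : R | 0 <= t], continuous (g i)}) ->
  (forall i, g i 0 < 0) ->
  (exists i, exists2 t, 0 <= t & 0 <= g i t) ->
  exists s, 0 < s /\ (exists i, g i s = 0) /\ (forall i, g i s <= 0) /\
    (forall i t, 0 <= t -> t < s -> g i t < 0).
Proof.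
move=> hc h0 [i0 [t0 t00 ht0]].
pose S := [set t : R | 0 <= t /\ exists i, 0 <= g i t].
have neS : S !=set0 by exists t0; split => //; exists i0.
have lbS : lbound S 0 by move=> x [].
have hlb : has_lbound S by exists 0.
set s := inf S.
have hs0 : 0 <= s by apply: lb_le_inf.
have hbelow : forall i t, 0 <= t -> t < s -> g i t < 0.
  move=> i t t0' ts; rewrite ltNge; apply/negP => hg.
  have : s <= t by apply: ge_inf => //; split => //; exists i.
  by rewrite leNgt ts.
have hcv : forall i, g i @ within [set t : R | 0 <= t] (nbhs s) --> g i s.
  by move=> i; apply: (proj1 (subspace_continuousP _ _) (hc i)).
have hex : exists i, 0 <= g i s.
  apply/not_existsP => hn.
  have hn' : forall i, g i s < 0 by move=> i; rewrite ltNge; apply/negP => h; apply: (hn i).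
  have := @filter_forall R I (fun i t => g i t < 0) (within [set t : R | 0 <= t] (nbhs s))
     (within_filter _ (nbhs_filter s)) (fun i => @cvgr_lt R _ _ (within_filter _ (nbhs_filter s)) _ _ (hcv i) 0 (hn' i)).
  rewrite /within /= => /nbhs_ballP [d /= d0 H].
  have hinf : has_inf S by split.
  have [x Sx xlt] := inf_adherent d0 hinf.
  have sx : s <= x by apply: ge_inf.
  case: Sx => x0 [j hj].
  have hb : ball s d x.
    rewrite /ball /= ler0_norm ?subr_le0 //; rewrite -/s in xlt; lra.
  have := H x hb x0 j; lra.
have hle : forall i, g i s <= 0.
  move=> i; rewrite leNgt; apply/negP => hpos.
  have := @cvgr_gt R _ _ (within_filter _ (nbhs_filter s)) _ _ (hcv i) 0 hpos.
  rewrite /within /= => /nbhs_ballP [d /= d0 H].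
  have [s0|spos] := eqVneq s 0.
    have hb0 : ball s d 0 by rewrite s0; apply: ballxx.
    by have := h0 i; have := H 0 hb0 (lexx 0); lra.
  have sp : 0 < s by rewrite lt_neqAle eq_sym spos hs0.
  pose t := s - Num.min (d / 2) (s / 2).
  have htt : 0 <= t.
    rewrite /t subr_ge0 ge_min; apply/orP; right.
    by rewrite ler_pdivrMr // ler_pMr // ler1n.
  have hts : t < s.
    have : 0 < Num.min (d/2) (s/2) by rewrite lt_min !divr_gt0.
    rewrite /t; lra.
  have hb : ball s d t.
    rewrite /ball /= /t opprB addrC subrK ger0_norm ?le_min ?divr_ge0 ?ltW //.
    rewrite gt_min; apply/orP; left.
    by rewrite ltr_pdivrMr // ltr_pMr // ltr1n.
  have := H t hb htt; have := hbelow i t htt hts; lra.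
have [i1 hi1] := hex.
have spos : 0 < s.
  rewrite lt_neqAle hs0 andbT; apply/eqP => s0.
  by have := h0 i1; move: hi1; rewrite -s0; lra.
exists s; split => //; split; last split => //.
by exists i1; apply/eqP; rewrite eq_le hle hi1.
Qed.
Lemma prod_bound (R : realType) (c d B e : R) :
  0 <= c -> c <= B -> -e <= d -> d <= e -> c * d <= B * e.
Proof. move=> *; nra. Qed.
Arguments prod_bound {R c d B e}.

Lemma sum_bound (R : realType) (n : nat) (f : 'I_n -> R) (c : R) :
  (forall k, f k <= c) -> \sum_(k < n) f k <= c *+ n.
Proof.
move=> h; rewrite -[n in c *+ n]card_ord -sumr_const; apply: ler_sum => k _; exact: h.
Qed.

Definition drift (R : realType) (n : nat) (kappa : R) (tth : R -> R)
  (x : 'I_n -> R) (j : 'I_n) : R :=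
  kappa * \sum_(k < n) theta tth (x j) (x k) * (x j - x k).
Arguments drift {R n} kappa tth x j.

Lemma key_bound (R : realType) (n m : nat) (kappa : R) (tth : R -> R)
  (x : 'I_n -> R) (B e g0 : R) (a b : 'I_n) :
  0 < kappa ->
  (forall s, 0 <= tth s) -> {homo tth : x y / x <= y} ->
  (forall j, tth (x j) <= B) -> 0 < e -> e < g0 ->
  (forall a' b' : 'I_n, (a' < m)%N -> (b' < m)%N -> x a' - x b' <= e) ->
  (forall a' b' : 'I_n, (a' < m)%N -> (m <= b')%N -> g0 - (x a' - x b') <= e) ->
  (((a < m)%N && (b < m)%N) /\ x a - x b = e \/
   ((a < m)%N && (m <= b)%N) /\ g0 - (x a - x b) = e) ->
  (if (a < m)%N && (b < m)%N then drift kappa tth x a - drift kappa tth x b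
   else drift kappa tth x b - drift kappa tth x a)
    <= kappa * (2 * B *+ n) * e.
Proof.
move=> k0 tnn tmono tB e0 eg hcl hgap hcase.
have tmin : forall u v, tth (Num.min (x u) (x v)) <= B.
  by move=> u v; apply: le_trans (tB u); apply: tmono; rewrite ge_min lexx.
have B0 : 0 <= B by apply: le_trans (tB a).
rewrite /drift -!mulrBr -!sumrB -mulrA.
case: hcase => [[/andP [am bm] hab]|[/andP [am bm] hab]].
  rewrite am bm /= ler_pM2l // mulrnAl.
  apply: sum_bound => k; rewrite /theta.
  case: (ltnP k m) => km.
    have h1 := hcl a k am km; have h2 := hcl k a km am.
    have h3 := hcl b k bm km; have h4 := hcl k b km bm.
    have p1 := prod_bound (tnn (Num.min (x a) (x k))) (tmin a k) (_ : -e <= x a - x k) h1.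
    have p2 := prod_bound (tnn (Num.min (x b) (x k))) (tmin b k) (_ : -e <= - (x b - x k)) (_ : - (x b - x k) <= e).
    rewrite mulrN in p2.
    have : -e <= x a - x k by lra.
    have : -e <= - (x b - x k) by lra.
    have : - (x b - x k) <= e by lra.
    move=> q1 q2 q3; have := p1 q3; have := p2 q2 q1; nra.
  have h1 := hgap b k bm km.
  rewrite (min_r (_ : x k <= x a)); last by lra.
  rewrite (min_r (_ : x k <= x b)); last by lra.
  have := tnn (x k); have := tB k; nra.
rewrite am /= ltnNge bm /= ler_pM2l // mulrnAl.
apply: sum_bound => k; rewrite /theta.
case: (ltnP k m) => km.
  have h1 := hcl a k am km; have h2 := hcl k a km am.
  have h3 := hgap k b km bm.
  rewrite (min_l (_ : x b <= x k)); last by lra.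
  have p1 := prod_bound (tnn (Num.min (x a) (x k))) (tmin a k) (_ : -e <= x a - x k) h1.
  have p2 := prod_bound (tnn (Num.min (x a) (x k))) (tmin a k) (_ : -e <= - (x a - x k)) (_ : - (x a - x k) <= e).
  rewrite mulrN in p2.
  have : -e <= x a - x k by lra.
  have : -e <= - (x a - x k) by lra.
  have : - (x a - x k) <= e by lra.
  move=> q1 q2 q3; have := p2 q2 q1; have := tnn (x b); nra.
have h1 := hgap a k am km.
rewrite (min_r (_ : x k <= x a)); last by lra.
rewrite (min_r (_ : x k <= x b)); last by lra.
have := tnn (x k); have := tB k; nra.
Qed.

Lemma tailmax_leP (R : realType) (n m : nat) (hmn : (m < n)%N) (x : 'I_n -> R) c :
  tailmax hmn x <= c <-> forall j : 'I_n, (m <= j)%N -> x j <= c.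
Proof.
rewrite /tailmax; split.
  by move/bigmax_leP => [_ H] j hj; apply: H.
move=> H; apply/bigmax_leP; split; last by move=> j; apply: H.
by apply: H => /=.
Qed.

Lemma le_tailmax (R : realType) (n m : nat) (hmn : (m < n)%N) (x : 'I_n -> R) (j : 'I_n) :
  (m <= j)%N -> x j <= tailmax hmn x.
Proof. by move=> hj; rewrite /tailmax; apply: le_bigmax_cond. Qed.
Arguments le_tailmax {R n m} hmn x {j}.
Arguments key_bound {R n m kappa tth x B e g0 a b}.
Arguments deriv_sign {R g t d}.
Arguments tailmax_leP {R n m hmn x c}.

Lemma phi_derive (R : realType) (eps L s : R) :
  is_derive s 1 (fun t : R => eps * expR (L * t)) (eps * (expR (L * s) * L)).
Proof.
have h1 : is_derive s 1 (fun t : R => L * t) L.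
  have := @is_deriveZ R R R id L s 1 1 (is_derive_id s 1).
  by rewrite /GRing.scale /= mulr1.
have h2 : is_derive s 1 (expR \o (fun t : R => L * t)) (expR (L * s) * L).
  by apply: is_derive1_comp.
by apply: (@is_deriveZ R R R _ eps s 1 _ h2).
Qed.

Lemma phi_cont (R : realType) (eps L : R) : continuous (fun t : R => eps * expR (L * t)).
Proof.
move=> x; apply: cvgM; first exact: cvg_cst.
apply: continuous_comp; last exact: continuous_expR.
apply: cvgM; [exact: cvg_cst | exact: cvg_id].
Qed.

Lemma small_le0 (R : realType) (x C D : R) :
  0 < C -> 0 < D -> (forall eps, 0 < eps -> eps * C <= D -> x < eps * C) -> x <= 0.
Proof.
move=> C0 D0 H; rewrite leNgt; apply/negP => x0.
have m0 : 0 < Num.min D x by rewrite lt_min D0 x0.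
have := H (Num.min D x / C) (divr_gt0 m0 C0).
rewrite divfK ?gt_eqF // ge_min lexx /= => /(_ isT).
have : Num.min D x <= x by rewrite ge_min lexx orbT.
lra.
Qed.

Theorem mainTheorem3 (R : realType) (n m : nat) (kappa : R) (tth : R -> R)
  (rho : R -> 'I_n -> R)
  (hn : (2 <= n)%N) (hkappa : 0 < kappa)
  (htth_nonneg : forall s, 0 <= tth s)
  (htth_lip : loc_lipschitz tth)
  (htth_mono : {homo tth : x y / x <= y})
  (htth_zero : forall s, s <= 0 -> tth s = 0)
  (htth_pos : forall s, 0 < s -> 0 < tth s)
  (hm1 : (1 <= m)%N) (hmn : (m < n)%N)
  (hcont : forall j : 'I_n,
      {within [set t : R | 0 <= t], continuous (fun t => rho t j)})
  (hode : forall (t : R), 0 < t -> forall j : 'I_n,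
      is_derive t (1 : R) (fun s => rho s j)
        (kappa * \sum_(k < n) theta tth (rho t j) (rho t k) * (rho t j - rho t k)))
  (hsimplex : in_simplex (rho 0))
  (heq0 : forall i j : 'I_n, (i < m)%N -> (j < m)%N -> rho 0 i = rho 0 j)
  (hgap0 : forall i j : 'I_n, (i < m)%N -> (m <= j)%N -> rho 0 j < rho 0 i)
  (hsorted0 : forall j k : 'I_n, (m <= j)%N -> (j <= k)%N -> rho 0 k <= rho 0 j) :
  (forall t : R, 0 <= t -> forall i j : 'I_n, (i < m)%N -> (j < m)%N ->
      rho t i = rho t j) /\
  (forall t : R, 0 <= t -> forall i : 'I_n, (i < m)%N ->
      rho t i - tailmax hmn (rho t) >= rho 0 i - tailmax hmn (rho 0)).
Proof.
have h0n : (0 < n)%N by apply: ltn_trans hm1 hmn.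
pose i0 : 'I_n := Ordinal (ltn_trans hm1 hmn).
have i0m : (i0 < m)%N by [].
pose jm : 'I_n := Ordinal hmn.
pose g0 := rho 0 i0 - tailmax hmn (rho 0).
have tm0 : tailmax hmn (rho 0) <= rho 0 jm.
  by apply/tailmax_leP => j hj; apply: hsorted0.
have g0pos : 0 < g0.
  have := hgap0 i0 jm i0m (leqnn m); rewrite /g0; lra.
have gap0 : forall a b : 'I_n, (a < m)%N -> (m <= b)%N -> g0 - (rho 0 a - rho 0 b) <= 0.
  move=> a b am bm; rewrite /g0 (heq0 a i0 am i0m).
  have := le_tailmax hmn (rho 0) bm; lra.
suff main : forall t, 0 <= t ->
   (forall a b : 'I_n, (a < m)%N -> (b < m)%N -> rho t a - rho t b <= 0) /\
   (forall a b : 'I_n, (a < m)%N -> (m <= b)%N -> g0 - (rho t a - rho t b) <= 0).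
  split.
    move=> t t0 i j im jm'; have [h1 _] := main t t0.
    have := h1 i j im jm'; have := h1 j i jm' im; lra.
  move=> t t0 i im; have [_ h2] := main t t0.
  rewrite (_ : rho 0 i - tailmax hmn (rho 0) = g0); last by rewrite /g0 (heq0 i i0 im i0m).
  have : tailmax hmn (rho t) <= rho t i - g0.
    by apply/tailmax_leP => j hj; have := h2 i j im hj; lra.
  lra.
move=> t1 t10.
have [c hc] : exists c : 'I_n -> R, forall j, (0 <= c j <= t1) /\
    forall t, 0 <= t -> t <= t1 -> rho t j <= rho (c j) j.
  suff [f hf] : {f : 'I_n -> R & forall j, (0 <= f j <= t1) /\
    forall t, 0 <= t -> t <= t1 -> rho t j <= rho (f j) j} by exists f.
  apply: (@choice _ _ (fun j cj => (0 <= cj <= t1) /\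
    forall t, 0 <= t -> t <= t1 -> rho t j <= rho cj j)) => j.
  have hcj : {within `[0, t1], continuous (fun t => rho t j)}.
    apply: continuous_subspaceW (hcont j) => x; rewrite /= in_itv /= => /andP[] //.
  have [cj] := EVT_max t10 hcj.
  rewrite in_itv /= => hcj1 hcj2; exists cj; split => // t ta tb.
  by apply: hcj2; rewrite in_itv /= ta tb.
pose B := \sum_(j < n) tth (rho (c j) j).
have hB : forall t j, 0 <= t -> t <= t1 -> tth (rho t j) <= B.
  move=> t j ta tb; apply: le_trans (htth_mono _ _ (proj2 (hc j) t ta tb)) _.
  rewrite /B (bigD1 j) //= lerDl; apply: sumr_ge0 => k _; exact: htth_nonneg.
have B0 : 0 <= B by apply: sumr_ge0 => k _; exact: htth_nonneg.
pose K := kappa * (2 * B *+ n).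
have K0 : 0 <= K by rewrite /K; apply: mulr_ge0; [exact: ltW | apply: mulrn_wge0; apply: mulr_ge0].
pose L := K + 1.
have L0 : 0 < L by rewrite /L; lra.
have C0 : 0 < expR (L * t1) by apply: expR_gt0.
have g20 : 0 < g0 / 2 by apply: divr_gt0.
suff hlt : forall eps, 0 < eps -> eps * expR (L * t1) <= g0 / 2 ->
   forall a b : 'I_n, (a < m)%N ->
     ((b < m)%N -> rho t1 a - rho t1 b < eps * expR (L * t1)) /\
     ((m <= b)%N -> g0 - (rho t1 a - rho t1 b) < eps * expR (L * t1)).
  split => a b am bm; apply: (@small_le0 R _ _ _ C0 g20) => eps e0 he.
    exact: (proj1 (hlt eps e0 he a b am) bm).
  exact: (proj2 (hlt eps e0 he a b am) bm).
move=> eps e0 hsmall.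
pose phi t := eps * expR (L * t).
pose p (q : 'I_n * 'I_n) t :=
  if (q.1 < m)%N && (q.2 < m)%N then rho t q.1 - rho t q.2
  else if (q.1 < m)%N && (m <= q.2)%N then g0 - (rho t q.1 - rho t q.2)
  else 0.
pose g q t := p q t - phi t.
suff hall : forall q, p q t1 < phi t1.
  move=> a b am; split => bm.
    by have := hall (a, b); rewrite /p /= am bm.
  by have := hall (a, b); rewrite /p /= am bm ltnNge bm.
move=> q; rewrite ltNge; apply/negP => hq.
have hcg : forall q', {within [set t : R | 0 <= t], continuous (g q')}.
  move=> [a b]; apply/subspace_continuousP => x x0.
  have ca := proj1 (subspace_continuousP _ _) (hcont a) x x0.
  have cb := proj1 (subspace_continuousP _ _) (hcont b) x x0.
  have cp : phi @ within [set t : R | 0 <= t] (nbhs x) --> phi x.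
    exact: (@cvg_within_filter _ _ _ _ _ _ _ (@phi_cont R eps L x)).
  rewrite /from_subspace /g /p /=; case: ifP => _.
    by apply: cvgB => //; apply: cvgB.
  case: ifP => _.
    by apply: cvgB => //; apply: cvgB => //; [exact: cvg_cst | apply: cvgB].
  by apply: cvgB => //; exact: cvg_cst.
have hg0 : forall q', g q' 0 < 0.
  move=> [a b]; rewrite /g /phi mulr0 expR0 mulr1 /p /=.
  case: ifP => [/andP [am bm]|_]; first by rewrite (heq0 a b am bm); lra.
  case: ifP => [/andP [am bm]|_]; last by lra.
  by have := gap0 a b am bm; lra.
have hq0 : exists q0, exists2 t, 0 <= t & 0 <= g q0 t.
  by exists q, t1 => //; rewrite /g subr_ge0.
have [s [spos [[q' hq'] [hle hbelow]]]] := @first_hit R _ g hcg hg0 hq0.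
have st1 : s <= t1.
  rewrite leNgt; apply/negP => h; have := hbelow q t1 t10 h.
  by rewrite /g; lra.
pose e := phi s.
have epos : 0 < e by rewrite /e /phi mulr_gt0 // expR_gt0.
have eg : e < g0.
  have : e <= phi t1 by rewrite /e /phi ler_pM2l // ler_expR ler_pM2l.
  rewrite /phi; lra.
have hcl : forall a' b' : 'I_n, (a' < m)%N -> (b' < m)%N -> rho s a' - rho s b' <= e.
  move=> a' b' am bm; have := hle (a', b'); rewrite /g /p /= am bm /e /=; lra.
have hgp : forall a' b' : 'I_n, (a' < m)%N -> (m <= b')%N -> g0 - (rho s a' - rho s b') <= e.
  move=> a' b' am bm; have := hle (a', b'); rewrite /g /p /= am bm ltnNge bm /e /=; lra.
have hBs : forall j, tth (rho s j) <= B by move=> j; apply: hB => //; exact: ltW.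
have dr : forall j, is_derive s 1 (fun t => rho t j) (drift kappa tth (rho s) j).
  by move=> j; apply: hode.
case: q' hq' => a b hab.
have hp : p (a, b) s = e by move: hab; rewrite /g /e; lra.
have hcase : (((a < m)%N && (b < m)%N) /\ rho s a - rho s b = e) \/
    (((a < m)%N && (m <= b)%N) /\ g0 - (rho s a - rho s b) = e).
  move: hp; rewrite /p /=; case: ifP => h1; first by left.
  case: ifP => h2; first by right.
  by move=> h0; move: epos; rewrite -h0 ltxx.
have kb := key_bound hkappa htth_nonneg htth_mono hBs epos eg hcl hgp hcase.
rewrite -/K in kb.
have pd := @phi_derive R eps L s.
have pe : eps * (expR (L * s) * L) = e * K + e by rewrite /e /phi /L; ring.
have hbl : forall t, 0 <= t -> t < s -> g (a, b) t < 0 by move=> t t0 ts; apply: hbelow.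
case: hcase => [[/andP [am bm] hd]|[/andP [am bm] hd]].
  have E : g (a, b) = ((fun t => rho t a) - (fun t => rho t b)) - phi.
    by apply: funext => t; rewrite /g /p /= am bm.
  rewrite E in hab hbl.
  have hgD : is_derive s 1 (((fun t => rho t a) - (fun t => rho t b)) - phi)
     (drift kappa tth (rho s) a - drift kappa tth (rho s) b - eps * (expR (L * s) * L)).
    by apply: is_deriveB => //; apply: is_deriveB.
  have := deriv_sign spos hgD hab hbl.
  rewrite am bm /= in kb.
  lra.
have E : g (a, b) = ((cst g0) - ((fun t => rho t a) - (fun t => rho t b))) - phi.
  by apply: funext => t; rewrite /g /p /= am ltnNge bm.
rewrite E in hab hbl.
have hgD : is_derive s 1 (((cst g0) - ((fun t => rho t a) - (fun t => rho t b))) - phi)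
   (0 - (drift kappa tth (rho s) a - drift kappa tth (rho s) b) - eps * (expR (L * s) * L)).
  by apply: is_deriveB => //; apply: is_deriveB.
have := deriv_sign spos hgD hab hbl.
rewrite am /= ltnNge bm /= in kb.
lra.
Qed.
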